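(* Let $S\subseteq\{0,1\}^\ell$ be a finite set of vectors such that for all $a,b,c,d\in S$ (not necessarily distinct) there is an index $h\in[\ell]$ with $a[h]=b[h]=c[h]=d[h]=1$ (i.e., $S$ has no orthogonal quadruple). Then the weighted directed graph $G=\rho(S)$ defined below satisfies $\mathrm{diam}(G)\le 4$.
   Context: $[\ell]=\{1,\dots,\ell\}$; for $x\in\{0,1\}^\ell$, $x[i]$ is its $i$-th coordinate. A ''double-arc'' (edge) of weight $w$ between $x$ and $y$ means both arcs $x\to y$ and $y\to x$ of weight $w$. Distances $d_G(x,y)$ are shortest directed path lengths; $\mathrm{diam}(G)=\max_{x,y} d_G(x,y)$ over ordered pairs. Construction of $G=\rho(S)$. Vertex set: two special vertices $u,v$ and six disjoint sets (index triples $(i,j,k)\in[\ell]^3$ are ordered and may have repeated entries): - ABC $=\{(a,b,c)_{ABC}: a,b,c\in S\}$; DCB $=\{(d,c,b)_{DCB}: d,c,b\in S\}$. - AB $=\{(a,b,i,j,k)_{AB}: a,b\in S,\ a[i]=a[j]=a[k]=1,$ and $b$ equals 1 on at least two of the positions $i,j,k\}$; DC $=\{(d,c,i,j,k)_{DC}: d,c\in S,\ d[i]=d[j]=d[k]=1,$ and $c$ equals 1 on at least two of the positions $i,j,k\}$. - $AD_Y=\{(a,d,i,j,k)_Y: a,d\in S,\ a[i]=a[j]=a[k]=d[i]=d[j]=d[k]=1\}$; $AD_X=\{(a,d,i,j,k)_X: a,d\in S,$ at most one of $a[i],a[j],a[k],d[i],d[j],d[k]$ equals $0\}$. Arcs incident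 to $u,v$ (an arc to/from a set means to/from every vertex of that set): arcs $u\to$ABC of weight 0 and ABC$\to u$ of weight 4; $v\to$DCB of weight 4 and DCB$\to v$ of weight 0; $u\to$AB of weight 0 and AB$\to u$ of weight 3; DC$\to v$ of weight 0 and $v\to$DC of weight 3; double-arcs $u$–$v$ of weight 2, $u$–$AD_X$ and $v$–$AD_X$ of weight 1, $u$–$AD_Y$ and $v$–$AD_Y$ of weight 2, AB–$v$ of weight 2, DC–$u$ of weight 2. All other arcs are double-arcs of weight 1, present exactly in the following cases (only when both endpoints exist): - $(a,b,c)_{ABC}$–$(a,b,i,j,k)_{AB}$ if some $h\in\{i,j,k\}$ has $b[h]=c[h]=1$; - $(d,c,b)_{DCB}$–$(d,c,i,j,k)_{DC}$ if some $h\in\{i,j,k\}$ has $c[h]=b[h]=1$; - $(a,b,i,j,k)_{AB}$–$(a,b,i',j',k')_{AB}$ and $(d,c,i,j,k)_{DC}$–$(d,c,i',j',k')_{DC}$ for all index triples; - $(a,b,i,j,k)_{AB}$–$(a,d,i,j,k)_Y$ and $(a,d,i,j,k)_Y$–$(d,c,i,j,k)_{DC}$; - $(a,d,i,j,k)_X$–$(a,d',i,j,k)_Y$ for $d\neq d'$, and $(a,d,i,j,k)_X$–$(a',d,i,j,k)_Y$ for $a\neq a'$; - $(a,d,i,j,k)_X$–$(a,d,i',j',k')_Y$ for all index triples. No other arcs exist. *)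

(* Defs.v *)
From mathcomp Require Import all_boot.
Set Implicit Arguments. Unset Strict Implicit. Unset Printing Implicit Defensive.

Record wdigraph := WDigraph {
  gV : Type;
  gvert : gV -> Prop;
  garc : gV -> gV -> nat -> Prop
}.

Inductive walk (G : wdigraph) : gV G -> gV G -> nat -> Prop :=
| walk_nil (x : gV G) : walk x x 0
| walk_cons (x y z : gV G) (w n : nat) :
    @garc G x y w -> walk y z n -> walk x z (w + n).

Definition dist_le (G : wdigraph) (x y : gV G) (n : nat) : Prop :=
  exists m, m <= n /\ @walk G x y m.

Definition diam_le (G : wdigraph) (n : nat) : Prop :=
  forall x y, @gvert G x -> @gvert G y -> @dist_le G x y n.

Section Rho.
Variable l : nat.
Definition vec := {ffun 'I_l -> bool}.
Definition idx := ('I_l * 'I_l * 'I_l)%type.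

Inductive vtx :=
| Vu | Vv
| VABC of vec & vec & vec
| VDCB of vec & vec & vec
| VAB  of vec & vec & idx
| VDC  of vec & vec & idx
| VADY of vec & vec & idx
| VADX of vec & vec & idx.

Definition t1 (t : idx) : 'I_l := t.1.1.
Definition t2 (t : idx) : 'I_l := t.1.2.
Definition t3 (t : idx) : 'I_l := t.2.

Definition ones3 (x : vec) (t : idx) : bool := [&& x (t1 t), x (t2 t) & x (t3 t)].
(** x equals 1 on at least two of the positions t1,t2,t3 (counted as the
    three entries of the ordered triple) *)
Definition two_of3 (x : vec) (t : idx) : bool :=
  2 <= (x (t1 t) : nat) + x (t2 t) + x (t3 t).
Definition common3 (x y : vec) (t : idx) : bool :=
  [|| x (t1 t) && y (t1 t), x (t2 t) && y (t2 t) | x (t3 t) && y (t3 t)].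
(** at most one of a[i],a[j],a[k],d[i],d[j],d[k] equals 0 *)
Definition atmost_one_zero (a d : vec) (t : idx) : bool :=
  4 < (a (t1 t) : nat) + a (t2 t) + a (t3 t) + d (t1 t) + d (t2 t) + d (t3 t).

Variable S : {set vec}.

Definition rho_vert (x : vtx) : Prop :=
  match x with
  | Vu | Vv => True
  | VABC a b c => [/\ a \in S, b \in S & c \in S]
  | VDCB d c b => [/\ d \in S, c \in S & b \in S]
  | VAB a b t => [/\ a \in S, b \in S, ones3 a t & two_of3 b t]
  | VDC d c t => [/\ d \in S, c \in S, ones3 d t & two_of3 c t]
  | VADY a d t => [/\ a \in S, d \in S, ones3 a t & ones3 d t]
  | VADX a d t => [/\ a \in S, d \in S & atmost_one_zero a d t]
  end.

(** one-directional arcs (weights given explicitly) *)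
Inductive sarc : vtx -> vtx -> nat -> Prop :=
| s_u_ABC a b c : sarc Vu (VABC a b c) 0
| s_ABC_u a b c : sarc (VABC a b c) Vu 4
| s_v_DCB d c b : sarc Vv (VDCB d c b) 4
| s_DCB_v d c b : sarc (VDCB d c b) Vv 0
| s_u_AB a b t : sarc Vu (VAB a b t) 0
| s_AB_u a b t : sarc (VAB a b t) Vu 3
| s_DC_v d c t : sarc (VDC d c t) Vv 0
| s_v_DC d c t : sarc Vv (VDC d c t) 3.

(** double-arcs, listed in one orientation *)
Inductive darc : vtx -> vtx -> nat -> Prop :=
| d_u_v : darc Vu Vv 2
| d_u_X a d t : darc Vu (VADX a d t) 1
| d_v_X a d t : darc Vv (VADX a d t) 1
| d_u_Y a d t : darc Vu (VADY a d t) 2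
| d_v_Y a d t : darc Vv (VADY a d t) 2
| d_AB_v a b t : darc (VAB a b t) Vv 2
| d_DC_u d c t : darc (VDC d c t) Vu 2
| d_ABC_AB a b c t : common3 b c t -> darc (VABC a b c) (VAB a b t) 1
| d_DCB_DC d c b t : common3 c b t -> darc (VDCB d c b) (VDC d c t) 1
| d_AB_AB a b t t' : darc (VAB a b t) (VAB a b t') 1
| d_DC_DC d c t t' : darc (VDC d c t) (VDC d c t') 1
| d_AB_Y a b d t : darc (VAB a b t) (VADY a d t) 1
| d_Y_DC a d c t : darc (VADY a d t) (VDC d c t) 1
| d_X_Yd a d d' t : d != d' -> darc (VADX a d t) (VADY a d' t) 1
| d_X_Ya a a' d t : a != a' -> darc (VADX a d t) (VADY a' d t) 1
| d_X_Y a d t t' : darc (VADX a d t) (VADY a d t') 1.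

Definition rho_arc (x y : vtx) (w : nat) : Prop :=
  [/\ rho_vert x, rho_vert y & (sarc x y w \/ darc x y w \/ darc y x w)].

Definition rho : wdigraph := @WDigraph vtx rho_vert rho_arc.
End Rho.

(* Main.v *)
Require Import Defs.
From mathcomp Require Import all_boot.
Set Implicit Arguments. Unset Strict Implicit. Unset Printing Implicit Defensive.

Lemma walk_app G (x y z : gV G) m n : walk x y m -> walk y z n -> walk x z (m+n).
Proof.
elim=> {x y m} [x|x y' y w k A _ IH] W2; first by rewrite add0n.
rewrite -addnA; exact: walk_cons A (IH W2).
Qed.

Lemma dl_via G (x y z : gV G) m n k :
  dist_le x y m -> dist_le y z n -> m + n <= k -> dist_le x z k.
Proof.
move=> [m1 [Hm1 W1]] [n1 [Hn1 W2]] Hk; exists (m1 + n1); split.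
  exact: leq_trans (leq_add Hm1 Hn1) Hk.
exact: walk_app W1 W2.
Qed.

Lemma dl0 G (x : gV G) k : dist_le x x k.
Proof. by exists 0; split; [|exact: walk_nil]. Qed.

Lemma go l (S : {set vec l}) (x y z : vtx l) w k :
  rho_arc S x y w -> @dist_le (rho S) y z (k - w) -> w <= k -> @dist_le (rho S) x z k.
Proof.
move=> A [m [Hm W]] Hw; exists (w + m); split.
  by rewrite -(subnKC Hw) leq_add2l.
exact: (@walk_cons (rho S) x y z w m A W).
Qed.

Section Facts.
Lemma ones3P l (a : vec l) h1 h2 h3 : a h1 -> a h2 -> a h3 -> ones3 a (h1,h2,h3).
Proof. by rewrite /ones3 /t1 /t2 /t3 /= => -> -> ->. Qed.
Lemma two12 l (a : vec l) h1 h2 h3 : a h1 -> a h2 -> two_of3 a (h1,h2,h3).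
Proof. by rewrite /two_of3 /t1 /t2 /t3 /= => -> ->; case: (a h3). Qed.
Lemma two13 l (a : vec l) h1 h2 h3 : a h1 -> a h3 -> two_of3 a (h1,h2,h3).
Proof. by rewrite /two_of3 /t1 /t2 /t3 /= => -> ->; case: (a h2). Qed.
Lemma two23 l (a : vec l) h1 h2 h3 : a h2 -> a h3 -> two_of3 a (h1,h2,h3).
Proof. by rewrite /two_of3 /t1 /t2 /t3 /= => -> ->; case: (a h1). Qed.
Lemma cm1 l (a b : vec l) h1 h2 h3 : a h1 -> b h1 -> common3 a b (h1,h2,h3).
Proof. by rewrite /common3 /t1 /t2 /t3 /= => -> ->. Qed.
Lemma cm2 l (a b : vec l) h1 h2 h3 : a h2 -> b h2 -> common3 a b (h1,h2,h3).
Proof. by rewrite /common3 /t1 /t2 /t3 /= => -> ->; rewrite orbT. Qed.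
Lemma cm3 l (a b : vec l) h1 h2 h3 : a h3 -> b h3 -> common3 a b (h1,h2,h3).
Proof. by rewrite /common3 /t1 /t2 /t3 /= => -> ->; rewrite !orbT. Qed.
Lemma amz1 l (a d : vec l) t : ones3 a t -> two_of3 d t -> atmost_one_zero a d t.
Proof.
move: t => [[i j] k]; rewrite /ones3 /two_of3 /atmost_one_zero /t1 /t2 /t3 /=.
by case/and3P=> -> -> ->; case: (d i); case: (d j); case: (d k).
Qed.
Lemma amz2 l (a d : vec l) t : two_of3 a t -> ones3 d t -> atmost_one_zero a d t.
Proof.
move: t => [[i j] k]; rewrite /ones3 /two_of3 /atmost_one_zero /t1 /t2 /t3 /=.
by move=> H /and3P[-> -> ->]; move: H; case: (a i); case: (a j); case: (a k).
Qed.
End Facts.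

Ltac fin := first [ done
  | (apply: ones3P; done) | (apply: two12; done) | (apply: two13; done)
  | (apply: two23; done) | (apply: cm1; done) | (apply: cm2; done)
  | (apply: cm3; done) | (apply: amz1; fin) | (apply: amz2; fin) ].
Ltac vt := rewrite /=; first [done | split; fin].
Ltac tarc := split; [vt|vt| first [left; constructor
   | right; left; constructor; fin | right; right; constructor; fin]].
Ltac stp Y W T := apply: (@go _ _ _ Y _ W); [T | | done].

Definition QH l (S : {set vec l}) := forall a b c d, a \in S -> b \in S -> c \in S -> d \in S ->
     exists h : 'I_l, [&& a h, b h, c h & d h].

Definition du l (x : vtx l) := match x with
 | Vu => 0 | Vv => 2 | VABC _ _ _ => 4 | VDCB _ _ _ => 3 | VAB _ _ _ => 3
 | VDC _ _ _ => 2 | VADY _ _ _ => 2 | VADX _ _ _ => 1 end.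
Definition dv l (x : vtx l) := match x with
 | Vu => 2 | Vv => 0 | VABC _ _ _ => 3 | VDCB _ _ _ => 0 | VAB _ _ _ => 2
 | VDC _ _ _ => 0 | VADY _ _ _ => 2 | VADX _ _ _ => 1 end.
Definition ud l (x : vtx l) := match x with
 | Vu => 0 | Vv => 2 | VABC _ _ _ => 0 | VDCB _ _ _ => 3 | VAB _ _ _ => 0
 | VDC _ _ _ => 2 | VADY _ _ _ => 2 | VADX _ _ _ => 1 end.
Definition vd l (x : vtx l) := match x with
 | Vu => 2 | Vv => 0 | VABC _ _ _ => 2 | VDCB _ _ _ => 4 | VAB _ _ _ => 2
 | VDC _ _ _ => 3 | VADY _ _ _ => 2 | VADX _ _ _ => 1 end.

Lemma du_ok l (S : {set vec l}) (Hq : QH S) x : rho_vert S x -> @dist_le (rho S) x (Vu l) (du x).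
Proof.
case: x => [||a b c|d c b|a b t|d c t|a d t|a d t] /= Hx.
- exact: dl0.
- by stp (@Vu l) 2 tarc; exact: dl0.
- by stp (@Vu l) 4 tarc; exact: dl0.
- case: Hx => Hd Hc Hb.
  have [h /and4P[d1 c1 b1 _]] := Hq d c b b Hd Hc Hb Hb.
  stp (VDC d c (h,h,h)) 1 tarc. stp (@Vu l) 2 tarc. exact: dl0.
- case: Hx => *; by stp (@Vu l) 3 tarc; exact: dl0.
- case: Hx => *; by stp (@Vu l) 2 tarc; exact: dl0.
- case: Hx => *; by stp (@Vu l) 2 tarc; exact: dl0.
- case: Hx => *; by stp (@Vu l) 1 tarc; exact: dl0.
Qed.

Lemma dv_ok l (S : {set vec l}) (Hq : QH S) x : rho_vert S x -> @dist_le (rho S) x (Vv l) (dv x).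
Proof.
case: x => [||a b c|d c b|a b t|d c t|a d t|a d t] /= Hx.
- by stp (@Vv l) 2 tarc; exact: dl0.
- exact: dl0.
- case: Hx => Ha Hb Hc.
  have [h /and4P[a1 b1 c1 _]] := Hq a b c c Ha Hb Hc Hc.
  stp (VAB a b (h,h,h)) 1 tarc. stp (@Vv l) 2 tarc. exact: dl0.
- case: Hx => *; by stp (@Vv l) 0 tarc; exact: dl0.
- case: Hx => *; by stp (@Vv l) 2 tarc; exact: dl0.
- case: Hx => *; by stp (@Vv l) 0 tarc; exact: dl0.
- case: Hx => *; by stp (@Vv l) 2 tarc; exact: dl0.
- case: Hx => *; by stp (@Vv l) 1 tarc; exact: dl0.
Qed.

Lemma ud_ok l (S : {set vec l}) (Hq : QH S) x : rho_vert S x -> @dist_le (rho S) (Vu l) x (ud x).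
Proof.
case: x => [||a b c|d c b|a b t|d c t|a d t|a d t] /= Hx.
- exact: dl0.
- by stp (@Vv l) 2 tarc; exact: dl0.
- case: Hx => *; by stp (VABC a b c) 0 tarc; exact: dl0.
- case: Hx => Hd Hc Hb.
  have [h /and4P[d1 c1 b1 _]] := Hq d c b b Hd Hc Hb Hb.
  stp (VDC d c (h,h,h)) 2 tarc. stp (VDCB d c b) 1 tarc. exact: dl0.
- case: Hx => *; by stp (VAB a b t) 0 tarc; exact: dl0.
- case: Hx => *; by stp (VDC d c t) 2 tarc; exact: dl0.
- case: Hx => *; by stp (VADY a d t) 2 tarc; exact: dl0.
- case: Hx => *; by stp (VADX a d t) 1 tarc; exact: dl0.
Qed.

Lemma vd_ok l (S : {set vec l}) (Hq : QH S) x : rho_vert S x -> @dist_le (rho S) (Vv l) x (vd x).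
Proof.
case: x => [||a b c|d c b|a b t|d c t|a d t|a d t] /= Hx.
- by stp (@Vu l) 2 tarc; exact: dl0.
- exact: dl0.
- case: Hx => *; stp (@Vu l) 2 tarc; by stp (VABC a b c) 0 tarc; exact: dl0.
- case: Hx => *; by stp (VDCB d c b) 4 tarc; exact: dl0.
- case: Hx => *; by stp (VAB a b t) 2 tarc; exact: dl0.
- case: Hx => *; by stp (VDC d c t) 3 tarc; exact: dl0.
- case: Hx => *; by stp (VADY a d t) 2 tarc; exact: dl0.
- case: Hx => *; by stp (VADX a d t) 1 tarc; exact: dl0.
Qed.

Ltac xyf C := split; [vt|vt| right; left; apply: C; fin].
Ltac xyr C := split; [vt|vt| right; right; apply: C; fin].

Lemma sp1 l (S : {set vec l}) (Hq : QH S) a d t d' c b :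
  rho_vert S (VADY a d t) -> rho_vert S (VDCB d' c b) ->
  @dist_le (rho S) (VADY a d t) (VDCB d' c b) 4.
Proof.
case=> Ha Hd ? ? [Hd' Hc Hb].
have [h1 /and4P[a1 d'1 d1 c1]] := Hq a d' d c Ha Hd' Hd Hc.
have [h2 /and4P[a2 d'2 c2 b2]] := Hq a d' c b Ha Hd' Hc Hb.
apply: (@go _ _ _ (VADX a d (h1,h1,h2)) _ 1); [xyr d_X_Y | | done].
have [E|ne] := eqVneq d d'.
  subst d'; apply: (@go _ _ _ (VADY a d (h1,h1,h2)) _ 1); [xyf d_X_Y | | done].
  stp (VDC d c (h1,h1,h2)) 1 tarc. stp (VDCB d c b) 1 tarc. exact: dl0.
apply: (@go _ _ _ (VADY a d' (h1,h1,h2)) _ 1); [xyf d_X_Yd | | done].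
stp (VDC d' c (h1,h1,h2)) 1 tarc. stp (VDCB d' c b) 1 tarc. exact: dl0.
Qed.

Lemma sp2 l (S : {set vec l}) (Hq : QH S) a b t d c t' :
  rho_vert S (VAB a b t) -> rho_vert S (VDC d c t') ->
  @dist_le (rho S) (VAB a b t) (VDC d c t') 4.
Proof.
case=> Ha Hb ? ? [Hd Hc ? ?].
have [h /and4P[a1 b1 d1 c1]] := Hq a b d c Ha Hb Hd Hc.
stp (VAB a b (h,h,h)) 1 tarc. stp (VADY a d (h,h,h)) 1 tarc.
stp (VDC d c (h,h,h)) 1 tarc. stp (VDC d c t') 1 tarc. exact: dl0.
Qed.

Lemma sp3 l (S : {set vec l}) (Hq : QH S) a b t d c b' :
  rho_vert S (VAB a b t) -> rho_vert S (VDCB d c b') ->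
  @dist_le (rho S) (VAB a b t) (VDCB d c b') 4.
Proof.
case=> Ha Hb ? ? [Hd Hc Hb'].
have [h1 /and4P[a1 b1 d1 c1]] := Hq a b d c Ha Hb Hd Hc.
have [h2 /and4P[a2 d2 c2 b2]] := Hq a d c b' Ha Hd Hc Hb'.
stp (VAB a b (h1,h1,h2)) 1 tarc. stp (VADY a d (h1,h1,h2)) 1 tarc.
stp (VDC d c (h1,h1,h2)) 1 tarc. stp (VDCB d c b') 1 tarc. exact: dl0.
Qed.

Lemma sp4 l (S : {set vec l}) (Hq : QH S) a b c0 d c t' :
  rho_vert S (VABC a b c0) -> rho_vert S (VDC d c t') ->
  @dist_le (rho S) (VABC a b c0) (VDC d c t') 4.
Proof.
case=> Ha Hb Hc0 [Hd Hc ? ?].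
have [h1 /and4P[a1 b1 d1 c1]] := Hq a b d c Ha Hb Hd Hc.
have [h2 /and4P[a2 b2 c2 d2]] := Hq a b c0 d Ha Hb Hc0 Hd.
stp (VAB a b (h1,h1,h2)) 1 tarc. stp (VADY a d (h1,h1,h2)) 1 tarc.
stp (VDC d c (h1,h1,h2)) 1 tarc. stp (VDC d c t') 1 tarc. exact: dl0.
Qed.

Lemma sp5 l (S : {set vec l}) (Hq : QH S) a b c0 a' d' t' :
  rho_vert S (VABC a b c0) -> rho_vert S (VADY a' d' t') ->
  @dist_le (rho S) (VABC a b c0) (VADY a' d' t') 4.
Proof.
case=> Ha Hb Hc0 [Ha' Hd' ? ?].
have [h1 /and4P[a1 b1 d1 a'1]] := Hq a b d' a' Ha Hb Hd' Ha'.
have [h2 /and4P[a2 b2 c2 d2]] := Hq a b c0 d' Ha Hb Hc0 Hd'.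
stp (VAB a b (h1,h1,h2)) 1 tarc. stp (VADY a d' (h1,h1,h2)) 1 tarc.
have [E|ne] := eqVneq a' a.
  subst a'; apply: (@go _ _ _ (VADX a d' (h1,h1,h2)) _ 1); [xyr d_X_Y | | done].
  apply: (@go _ _ _ (VADY a d' t') _ 1); [xyf d_X_Y | | done]. exact: dl0.
apply: (@go _ _ _ (VADX a' d' (h1,h1,h2)) _ 1); [xyr d_X_Ya | | done].
apply: (@go _ _ _ (VADY a' d' t') _ 1); [xyf d_X_Y | | done]. exact: dl0.
Qed.

Lemma sp6 l (S : {set vec l}) (Hq : QH S) a b c0 d c b' :
  rho_vert S (VABC a b c0) -> rho_vert S (VDCB d c b') ->
  @dist_le (rho S) (VABC a b c0) (VDCB d c b') 4.
Proof.
case=> Ha Hb Hc0 [Hd Hc Hb'].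
have [h1 /and4P[a1 d1 b1 c1]] := Hq a d b c Ha Hd Hb Hc.
have [h2 /and4P[a2 d2 b2 c2]] := Hq a d b c0 Ha Hd Hb Hc0.
have [h3 /and4P[a3 d3 c3 b3]] := Hq a d c b' Ha Hd Hc Hb'.
stp (VAB a b (h1,h2,h3)) 1 tarc. stp (VADY a d (h1,h2,h3)) 1 tarc.
stp (VDC d c (h1,h2,h3)) 1 tarc. stp (VDCB d c b') 1 tarc. exact: dl0.
Qed.

Theorem mainTheorem2 (l : nat) (S : {set {ffun 'I_l -> bool}}) :
  (forall a b c d, a \in S -> b \in S -> c \in S -> d \in S ->
     exists h : 'I_l, [&& a h, b h, c h & d h]) ->
  diam_le (rho S) 4.
Proof.
move=> Hq x y Hx Hy.
have Vu_ := dl_via (du_ok Hq Hx) (ud_ok Hq Hy).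
have Vv_ := dl_via (dv_ok Hq Hx) (vd_ok Hq Hy).
move: x y Hx Hy Vu_ Vv_ => [||a b c|d c b|a b t|d c t|a d t|a d t]
  [||a' b' c'|d' c' b'|a' b' t'|d' c' t'|a' d' t'|a' d' t'] Hx Hy Vu_ Vv_;
 first [ exact: Vu_ | exact: Vv_ | exact: sp1 | exact: sp2 | exact: sp3
       | exact: sp4 | exact: sp5 | exact: sp6 ].
Qed.
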